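(* In the two-door cascading memoryless setting, let $\pi=(\pi_0,\pi_1,\pi_2,\dots)$ and $\pi'=(\pi'_0,\pi'_1,\pi'_2,\dots)$ be semi-fractional sequences (given as non-decreasing sequences of non-negative reals with $\pi_0=\pi'_0=0$). If $\pi_i\le\pi'_i\le\pi_i+1$ for all $i$, then $\mathbb{E}[\pi']\le\mathbb{E}[\pi]+1$.
   Context: Two cascading memoryless doors with durations: parameters $p_1,p_2\in(0,1)$, $q_1=1-p_1$, $q_2=1-p_2$, and $c>0$. Both doors start closed. A semi-fractional sequence given by a non-decreasing sequence of reals $0=\pi_0\le\pi_1\le\pi_2\le\cdots$ is the alternating knock sequence $1^{\pi_1-\pi_0}\,2\,1^{\pi_2-\pi_1}\,2\cdots$. A 1-knock $1^t$ takes $t$ time units and, if door 1 is closed, opens it with probability $1-q_1^t$, independently of everything else. A 2-knock takes $c$ time units and opens door 2 with probability $p_2$ (independently) if door 1 is open at that time, and with probability $0$ otherwise. There is no feedback. The running time is the time at which both doors are open (the $i$-th 2-knock ends at time $\pi_i+ci$), and $\mathbb{E}[\pi]$ denotes its expectation. *)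

(* Defs.v *)
From HB Require Import structures.
From mathcomp Require Import all_boot all_order all_algebra.
From mathcomp Require Import all_classical all_reals all_analysis.
Set Implicit Arguments. Unset Strict Implicit. Unset Printing Implicit Defensive.
Import Order.TTheory GRing.Theory Num.Theory.
Local Open Scope ring_scope.

Section Doors.
Variable R : realType.

Definition semi_fractional (pi : nat -> R) : Prop :=
  pi 0%N = 0 /\ (forall n, pi n <= pi n.+1).

(* Probability that door 1 is still closed after total 1-knocking time t. *)
Definition closed1 (p1 : R) (t : R) : R := (1 - p1) `^ t.

(* Probability that the running time equals pi i + c*i, i.e. the i-th 2-knock
   (i >= 1) is the first one opening door 2: door 1 opened during the block
   1^(pi j - pi (j-1)) preceding the j-th 2-knock (j <= i), the 2-knocks
   j, ..., i-1 failed and the i-th one succeeded. *)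
Definition prob_end_at (p1 p2 : R) (pi : nat -> R) (i : nat) : R :=
  \sum_(1 <= j < i.+1)
     (closed1 p1 (pi j.-1) - closed1 p1 (pi j)) * (1 - p2) ^+ (i - j) * p2.

Definition prob_never (p1 p2 : R) (pi : nat -> R) : \bar R :=
  (1%:E - \sum_(1 <= i <oo) (prob_end_at p1 p2 pi i)%:E)%E.

(* Expected running time E[pi] (in the extended reals; the convention
   +oo * 0 = 0 applies to the event of infinite running time). *)
Definition expected_time (p1 p2 c : R) (pi : nat -> R) : \bar R :=
  (\sum_(1 <= i <oo) ((pi i + c * i%:R) * prob_end_at p1 p2 pi i)%:E
   + +oo * prob_never p1 p2 pi)%E.

End Doors.

(* Main.v *)
Require Import Defs.
From HB Require Import structures.
From mathcomp Require Import all_boot all_order all_algebra.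
From mathcomp Require Import all_classical all_reals all_analysis.
From mathcomp Require Import ring lra.
Import Order.TTheory GRing.Theory Num.Theory.
Set Implicit Arguments. Unset Strict Implicit.
Set Implicit Arguments. Unset Strict Implicit.
Local Open Scope ring_scope.
Section Real.
Variable R : realType.
Variable p2 : R.
Hypothesis hp2 : 0 < p2 < 1.

Definition Bs (F : nat -> R) n :=
  \sum_(1 <= j < n.+1) (F j.-1 - F j) * (1 - p2) ^+ (n - j).
Definition Us F n := (1 - p2) * Bs F n + F n.
Definition Ss F n := \sum_(1 <= i < n.+1) Bs F i * p2.

Lemma Bs0 F : Bs F 0 = 0.
Proof. by rewrite /Bs big_geq. Qed.

Lemma BsS F n : Bs F n.+1 = (1 - p2) * Bs F n + (F n - F n.+1).
Proof.
rewrite /Bs big_nat_recr //= subnn expr0 mulr1; congr (_ + _).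
rewrite big_distrr /=; apply: eq_big_nat => j /andP[_ hj].
by rewrite subSn // exprS; ring.
Qed.

Lemma UsS F n : Us F n.+1 = (1 - p2) * Us F n + p2 * F n.+1.
Proof. rewrite /Us BsS; ring. Qed.

Lemma SsU F n : F 0 = 1 -> Ss F n + Us F n = 1.
Proof.
move=> F0; elim: n => [|n IH].
  by rewrite /Ss /Us big_geq // Bs0 F0; ring.
rewrite /Ss big_nat_recr //= -/(Ss F n) -IH /Us BsS; ring.
Qed.

Lemma Bs_ge0 F : (forall n, F n.+1 <= F n) -> forall n, 0 <= Bs F n.
Proof.
move=> Fd; elim=> [|n IH]; first by rewrite Bs0.
rewrite BsS; apply: addr_ge0; last by rewrite subr_ge0.
by apply: mulr_ge0 => //; case/andP: hp2 => _ h; rewrite subr_ge0 ltW.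
Qed.

Lemma Us_ge0 F : (forall n, F n.+1 <= F n) -> (forall n, 0 <= F n) -> forall n, 0 <= Us F n.
Proof.
move=> Fd F0 n; rewrite /Us; apply: addr_ge0 => //; apply: mulr_ge0; last exact: Bs_ge0.
by case/andP: hp2 => _ h; rewrite subr_ge0 ltW.
Qed.

Lemma Us_le F F' : F' 0 = F 0 -> (forall n, F' n <= F n) -> forall n, Us F' n <= Us F n.
Proof.
move=> e le; elim=> [|n IH]; first by rewrite /Us !Bs0 e.
rewrite !UsS; case/andP: hp2 => h0 h1.
apply: lerD; apply: ler_wpM2l => //; first by rewrite subr_ge0 ltW.
exact: ltW.
Qed.


Definition Ls F (x : nat -> R) n :=
  \sum_(1 <= i < n.+1) x i * (Bs F i * p2) + x n * Us F n.

Lemma LsS F x n : Ls F x n.+1 = Ls F x n + (x n.+1 - x n) * Us F n.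
Proof.
rewrite /Ls big_nat_recr //= /Us BsS; ring.
Qed.

Lemma Us_step F m : Us F m.+1 = Us F m - Bs F m.+1 * p2.
Proof. rewrite UsS /Us BsS; ring. Qed.

Variables (F F' x x' : nat -> R).
Hypotheses (Fd : forall n, F n.+1 <= F n) (F'd : forall n, F' n.+1 <= F' n)
  (Fge0 : forall n, 0 <= F n) (F'ge0 : forall n, 0 <= F' n)
  (F0 : F 0 = 1) (F'0 : F' 0 = 1) (FF' : forall n, F' n <= F n)
  (x'0 : x' 0 = 0) (x'i : forall n, x' n <= x' n.+1)
  (xx' : forall n, x' n <= x n + 1).

Lemma x'ge0 n : 0 <= x' n.
Proof. by elim: n => [|n IH]; [rewrite x'0 | exact: le_trans (x'i n)]. Qed.

Lemma x'mono n k : x' n <= x' (n + k).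
Proof. elim: k => [|k IH]; first by rewrite addn0. by rewrite addnS (le_trans IH). Qed.

Lemma L_le n : Ls F' x' n <= Ls F x' n.
Proof.
elim: n => [|n IH]; first by rewrite /Ls !big_geq // x'0 !mul0r.
rewrite !LsS; apply: lerD => //; apply: ler_wpM2l; first by rewrite subr_ge0.
apply: Us_le => //; by rewrite F0 F'0.
Qed.

Lemma N_mono n k : Ls F x' n <=
  \sum_(1 <= i < (n + k).+1) x' i * (Bs F i * p2) + x' n * Us F (n + k).
Proof.
elim: k => [|k IH]; first by rewrite addn0.
apply: (le_trans IH); rewrite addnS [X in _ <= X + _]big_nat_recr //= Us_step.
have : 0 <= (x' (n + k).+1 - x' n) * (Bs F (n + k).+1 * p2).
  apply: mulr_ge0; first by rewrite subr_ge0 -addnS x'mono.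
  by apply: mulr_ge0; [exact: Bs_ge0 | case/andP: hp2 => /ltW].
lra.
Qed.

Lemma fin_bound n m : (n <= m)%N ->
  \sum_(1 <= i < n.+1) x' i * (Bs F' i * p2) <=
  \sum_(1 <= i < m.+1) x i * (Bs F i * p2) + Ss F m + x' n * Us F m.
Proof.
move=> nm.
have h1 : \sum_(1 <= i < n.+1) x' i * (Bs F' i * p2) <= Ls F' x' n.
  rewrite /Ls lerDl; apply: mulr_ge0; [exact: x'ge0 | exact: Us_ge0].
apply: (le_trans h1); apply: (le_trans (L_le n)).
have := N_mono n (m - n); rewrite subnKC // => h2; apply: (le_trans h2).
rewrite lerD2r /Ss -big_split /=; apply: ler_sum_nat => i _.
have -> : x i * (Bs F i * p2) + Bs F i * p2 = (x i + 1) * (Bs F i * p2) by ring.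
apply: ler_wpM2r => //.
by apply: mulr_ge0; [exact: Bs_ge0 | case/andP: hp2 => /ltW].
Qed.


Lemma Us_anti m i : Us F (m + i) <= Us F m.
Proof.
elim: i => [|i IH]; first by rewrite addn0.
rewrite addnS Us_step; apply: le_trans IH; rewrite lerBlDr lerDl.
by apply: mulr_ge0; [exact: Bs_ge0 | case/andP: hp2 => /ltW].
Qed.

End Real.
Section Ser.
Variable R : realType.
Local Open Scope ereal_scope.

Lemma ser_ub (u : nat -> R) (x : \bar R) : (forall n, (0 <= u n)%R) ->
  (forall k, (\sum_(1 <= i < k.+1) u i)%:E <= x) ->
  \sum_(1 <= i <oo) (u i)%:E <= x.
Proof.
move=> u0 h; apply: lime_le.
  by apply: is_cvg_ereal_nneg_natsum => n _; rewrite lee_fin.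
apply: nearW => -[|k]; first by rewrite big_geq //; apply: le_trans (h 0%N); rewrite big_geq.
by rewrite sumEFin.
Qed.

Lemma ser_ge (u : nat -> R) k : (forall n, (0 <= u n)%R) ->
  (\sum_(1 <= i < k.+1) u i)%:E <= \sum_(1 <= i <oo) (u i)%:E.
Proof.
move=> u0; rewrite -sumEFin; apply: (@nneseries_lim_ge R (fun i => (u i)%:E) xpredT).
by move=> n _ _; rewrite lee_fin.
Qed.

Lemma ser_ge0 (u : nat -> R) : (forall n, (0 <= u n)%R) ->
  0 <= \sum_(1 <= i <oo) (u i)%:E.
Proof.
move=> u0; have := @ser_ge u 0 u0; by rewrite big_geq.

Qed.
End Ser.
Unset Implicit Arguments. Set Strict Implicit.

Theorem mainTheorem11 (R : realType) (p1 p2 c : R)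
  (hp1 : 0 < p1 < 1) (hp2 : 0 < p2 < 1) (hc : 0 < c)
  (pi pi' : nat -> R)
  (hpi : semi_fractional pi) (hpi' : semi_fractional pi')
  (hle : forall i, pi i <= pi' i <= pi i + 1) :
  (expected_time p1 p2 c pi' <= expected_time p1 p2 c pi + 1%:E)%E.
Proof.
case: hpi => pi0 pid; case: hpi' => pi'0 pi'd.
set F := fun n => closed1 p1 (pi n).
set F' := fun n => closed1 p1 (pi' n).
set x := fun n => pi n + c * n%:R.
set x' := fun n => pi' n + c * n%:R.
have hb : 0 < 1 - p1 <= 1 by case/andP: hp1 => a b; apply/andP; split; lra.
have Fd : forall n, F n.+1 <= F n by move=> n; exact: ger_powR.
have F'd : forall n, F' n.+1 <= F' n by move=> n; exact: ger_powR.
have Fge0 : forall n, 0 <= F n by move=> n; exact: powR_ge0.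
have F'ge0 : forall n, 0 <= F' n by move=> n; exact: powR_ge0.
have F0 : F 0%N = 1 by rewrite /F /closed1 pi0 powRr0.
have F'0 : F' 0%N = 1 by rewrite /F' /closed1 pi'0 powRr0.
have FF' : forall n, F' n <= F n by move=> n; apply: ger_powR => //; case/andP: (hle n).
have x'0 : x' 0%N = 0 by rewrite /x' pi'0 mulr0 addr0.
have x'i : forall n, x' n <= x' n.+1.
  move=> n; rewrite /x' -natr1 mulrDr mulr1; have := pi'd n; lra.
have xx' : forall n, x' n <= x n + 1.
  move=> n; rewrite /x' /x; case/andP: (hle n) => _; lra.
have pige0 : forall n, 0 <= pi n.
  by elim=> [|n IH]; [rewrite pi0 | exact: le_trans (pid n)].
have xge0 : forall n, 0 <= x n.
  move=> n; rewrite /x; apply: addr_ge0 => //; apply: mulr_ge0 => //; exact: ltW.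
have x'ge0 := x'ge0 x'0 x'i.
have peq : forall G : nat -> R, prob_end_at p1 p2 G =
   (fun i => Bs p2 (fun n => closed1 p1 (G n)) i * p2).
  move=> G; apply: funext => i; rewrite /prob_end_at /Bs big_distrl /=.
  by apply: eq_bigr => j _.
have p2ge0 : 0 <= p2 by case/andP: hp2 => /ltW.
have Pge0 : forall n, 0 <= Bs p2 F n * p2 by move=> n; apply: mulr_ge0 => //; exact: Bs_ge0.
have P'ge0 : forall n, 0 <= Bs p2 F' n * p2 by move=> n; apply: mulr_ge0 => //; exact: Bs_ge0.
rewrite /expected_time /prob_never !peq -/F -/F'.
set S := (\sum_(1 <= i <oo) (Bs p2 F i * p2)%:E)%E.
set S' := (\sum_(1 <= i <oo) (Bs p2 F' i * p2)%:E)%E.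
set E := (\sum_(1 <= i <oo) ((pi i + c * i%:R) * (Bs p2 F i * p2))%:E)%E.
set E' := (\sum_(1 <= i <oo) ((pi' i + c * i%:R) * (Bs p2 F' i * p2))%:E)%E.
have Eg0 : (0 <= E)%E by apply: ser_ge0 => n; exact: mulr_ge0 (xge0 n) (Pge0 n).
have Sle1 : (S <= 1)%E.
  apply: ser_ub => // k; rewrite lee_fin.
  have := SsU p2 k F0; have := Us_ge0 hp2 Fd Fge0 k; rewrite /Ss; lra.
have Sge0 : (0 <= S)%E by exact: ser_ge0.
have EnNy : E != -oo%E by rewrite gt_eqF // (lt_le_trans _ Eg0) // ltNy0.
have Sfin : S = (fine S)%:E.
  by rewrite fineK // ge0_fin_numE // (le_lt_trans Sle1) // ltry.
move: Sle1; rewrite le_eqVlt => /orP[/eqP S1 | Slt1]; last first.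
  have hinf : (+oo * (1 - S) = +oo)%E.
    rewrite Sfin -EFinB gt0_mulye // lte_fin subr_gt0 -lte_fin -Sfin //.
  by rewrite hinf addey // addye // leey.
have S'ge1 : (1 <= S')%E.
  rewrite -S1; apply: ser_ub => // k.
  apply: (@le_trans _ _ ((\sum_(1 <= i < k.+1) Bs p2 F' i * p2)%:E)); last exact: ser_ge.
  rewrite lee_fin.
  have := SsU p2 k F0; have := SsU p2 k F'0.
  have := Us_le hp2 (etrans F'0 (esym F0)) FF' k; rewrite /Ss; lra.
rewrite S1 subee // mule0 adde0.
have hneg : (+oo * (1 - S') <= 0)%E by apply: mule_ge0_le0 => //; rewrite sube_le0.
apply: le_trans (leeD (lexx E') hneg) _; rewrite adde0.
have [Einf|Efin] := eqVneq E +oo%E; first by rewrite Einf addye // leey.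
have Ef : E \is a fin_num by rewrite ge0_fin_numE // lt_neqAle Efin leey.
set e := fine E; have Ee : E = e%:E by rewrite fineK.
apply: ser_ub => [n|k]; first exact: mulr_ge0 (x'ge0 n) (P'ge0 n).
rewrite Ee -EFinD lee_fin leNgt; apply/negP => hA.
set A := (\sum_(1 <= i < k.+1) _) in hA.
have key : forall m, (k <= m)%N -> A - e - 1 <= x' k * Us p2 F m.
  move=> m km; have h1 := fin_bound hp2 Fd F'd F'ge0 F0 F'0 FF' x'0 x'i xx' km.
  have h2 : \sum_(1 <= i < m.+1) x i * (Bs p2 F i * p2) <= e.
    rewrite -lee_fin -Ee; apply: ser_ge => n; exact: mulr_ge0.
  have h3 := SsU p2 m F0; have h4 := Us_ge0 hp2 Fd Fge0 m.
  move: h1 h2 h3 h4; rewrite /A /x /x' /=; lra.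
have xpos : 0 < x' k.
  rewrite lt_def x'ge0 andbT; apply/negP => /eqP h0.
  by have := key k (leqnn k); rewrite h0 mul0r; lra.
set d := (A - e - 1) / x' k.
have dpos : 0 < d by apply: divr_gt0 => //; lra.
have Ub : forall m, (k <= m)%N -> d <= Us p2 F m.
  by move=> m km; rewrite /d ler_pdivrMr // mulrC; exact: key.
have : (S <= (1 - d)%:E)%E.
  apply: ser_ub => // j; rewrite lee_fin.
  have := SsU p2 j F0; have := SsU p2 (maxn j k) F0; have := Ub (maxn j k) (leq_maxr j k).
  have := Us_anti hp2 Fd j (maxn j k - j); rewrite subnKC ?leq_maxl // /Ss; lra.
rewrite S1 lee_fin; lra.
Qed.
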